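(* Let $p=2$ and let $a,b\in\mathbb{C}_2$ with $a\neq0$, $b\neq0$, $a\neq b$ and $|2a|_2>|b|_2$. Let $P=-\frac1b$, $D=\mathbb{C}_2\setminus\{P\}$, $f(x)=\frac{ax^2}{bx+1}$ on $D$, $x_1=0$, $x_2=\frac1{a-b}$, and $r_1=\frac1{|a|_2}$. Then $x_1$ and $x_2$ are attracting fixed points of $f$, and $$A(x_1)=B_{r_1}(x_1),\qquad A(x_2)=B_{r_1}(x_2).$$
   Context: $\mathbb{C}_2$ is the field of complex $2$-adic numbers with $2$-adic norm $|\cdot|_2$. For $c\in\mathbb{C}_2$, $r>0$: $B_r(c)=\{x:|x-c|_2<r\}$. For $y\in D$, $y^{(n)}=f^n(y)$ is the $n$-th iterate (defined as long as no earlier iterate equals $P$). A fixed point $x^{(0)}$ of $f$ is attracting if $|f'(x^{(0)})|_2<1$. Its basin of attraction is $A(x^{(0)})=\{y: y^{(n)}\text{ defined for all }n,\ y^{(n)}\to x^{(0)}\}$. *)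

(* Defs.v *)
From HB Require Import structures.
From mathcomp Require Import all_boot all_order all_algebra.
From mathcomp Require Import reals.
Set Implicit Arguments. Unset Strict Implicit. Unset Printing Implicit Defensive.
Import Order.TTheory GRing.Theory Num.Theory.
Local Open Scope ring_scope.

(* abs is a complete non-archimedean absolute value on the algebraically
   closed field K of characteristic 0, normalized by |2| = 1/2
   (so it restricts to the 2-adic absolute value on Q). *)
Definition C2_like (K : closedFieldType) (R : realType) (abs : K -> R) : Prop :=
  (forall x, 0 <= abs x) /\
  (forall x, abs x = 0 <-> x = 0) /\
  (forall x y, abs (x * y) = abs x * abs y) /\
  (forall x y, abs (x + y) <= Num.max (abs x) (abs y)) /\
  (forall n : nat, (n.+1)%:R != 0 :> K) /\
  abs 2 = 2^-1 /\
  (forall u : nat -> K,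
     (forall e, 0 < e -> exists N, forall m n, (N <= m)%N -> (N <= n)%N ->
        abs (u m - u n) < e) ->
     exists l, forall e, 0 < e -> exists N, forall n, (N <= n)%N ->
        abs (u n - l) < e).

Definition cvgK (K : fieldType) (R : realType) (abs : K -> R)
  (u : nat -> K) (l : K) : Prop :=
  forall e, 0 < e -> exists N, forall n, (N <= n)%N -> abs (u n - l) < e.

Definition ballK (K : fieldType) (R : realType) (abs : K -> R)
  (c : K) (r : R) (x : K) : Prop := abs (x - c) < r.

Definition has_derivK (K : fieldType) (R : realType) (abs : K -> R)
  (f : K -> K) (x0 L : K) : Prop :=
  forall e, 0 < e -> exists d, 0 < d /\ forall h, 0 < abs h -> abs h < d ->
    abs ((f (x0 + h) - f x0) / h - L) < e.

Definition attracting (K : fieldType) (R : realType) (abs : K -> R)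
  (f : K -> K) (P x0 : K) : Prop :=
  x0 != P /\ f x0 = x0 /\ exists L, has_derivK abs f x0 L /\ abs L < 1.

(* basin of attraction: all iterates defined (y^(n) <> P for all n,
   including y^(0) = y) and y^(n) -> x0 *)
Definition basin (K : fieldType) (R : realType) (abs : K -> R)
  (f : K -> K) (P x0 y : K) : Prop :=
  (forall n, iter n f y != P) /\ cvgK abs (fun n => iter n f y) x0.

(* Main.v *)
Require Import Defs.
From HB Require Import structures.
From mathcomp Require Import all_boot all_order all_algebra.
From mathcomp Require Import reals.
From mathcomp Require Import ring lra.
Set Implicit Arguments. Unset Strict Implicit. Unset Printing Implicit Defensive.
Import Order.TTheory GRing.Theory Num.Theory.
Local Open Scope ring_scope.

Lemma bernoulli (R : realType) (t : R) n : 0 <= t -> 1 + t *+ n <= (1 + t) ^+ n.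
Proof.
move=> t0; elim: n => [|n IH]; first by rewrite mulr0n addr0 expr0.
rewrite exprS mulrSr.
have h1 : 0 <= 1 + t by lra.
apply: le_trans (_ : (1 + t) * (1 + t *+ n) <= _); last by rewrite ler_wpM2l.
have : 0 <= t * (t *+ n) by rewrite mulr_ge0 // mulrn_wge0.
nra.
Qed.

Lemma geom_small (R : realType) (k C e : R) : 0 <= k -> k < 1 -> 0 <= C -> 0 < e ->
  exists N, forall n, (N <= n)%N -> k ^+ n * C < e.
Proof.
move=> k0 k1 C0 e0.
have [->|kn0] := eqVneq k 0.
  exists 1%N => n hn; rewrite expr0n; case: n hn => // n _ /=; by rewrite mul0r.
have kp : 0 < k by rewrite lt_neqAle eq_sym kn0.
pose t := k^-1 - 1.
have tp : 0 < t.
  rewrite /t subr_gt0 -[1]invr1 ltf_pV2 ?posrE //; lra.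
have kt : k * (1 + t) = 1 by rewrite /t addrC subrK mulfV.
have te : 0 < t * e by rewrite mulr_gt0.
have b0 : 0 <= C / (t * e) by rewrite divr_ge0 // ltW.
exists (Num.Def.archi_bound (C / (t * e))) => n hn.
have hN := archi_boundP b0.
have hn' : (Num.Def.archi_bound (C / (t * e)))%:R <= n%:R :> R by rewrite ler_nat.
have hC : C < t * e * n%:R.
  have := lt_le_trans hN hn'.
  by rewrite ltr_pdivrMr // mulrC.
have hb := bernoulli n (ltW tp).
have kn : 0 < k ^+ n by rewrite exprn_gt0.
have kk : k ^+ n * (1 + t) ^+ n = 1 by rewrite -exprMn kt expr1n.
have : k ^+ n * (1 + t *+ n) <= 1.
  by rewrite -[X in _ <= X]kk ler_wpM2l ?(ltW kn).
rewrite -mulr_natr => H.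
have : k ^+ n * C < k ^+ n * ((1 + t * n%:R) * e).
  rewrite ltr_pM2l //; nra.
nra.
Qed.


Lemma abs_ge0 (K : closedFieldType) (R : realType) (abs : K -> R) (habs : C2_like abs) x : 0 <= abs x.
Proof. by case: habs. Qed.
Lemma abs_eq0 (K : closedFieldType) (R : realType) (abs : K -> R) (habs : C2_like abs) x : abs x = 0 <-> x = 0.
Proof. by case: habs => _ [H _]. Qed.
Lemma absM (K : closedFieldType) (R : realType) (abs : K -> R) (habs : C2_like abs) x y : abs (x * y) = abs x * abs y.
Proof. by case: habs => _ [_ [H _]]. Qed.
Lemma absD (K : closedFieldType) (R : realType) (abs : K -> R) (habs : C2_like abs) x y : abs (x + y) <= Num.max (abs x) (abs y).
Proof. by case: habs => _ [_ [_ [H _]]]. Qed.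
Lemma abs2 (K : closedFieldType) (R : realType) (abs : K -> R) (habs : C2_like abs) : abs 2 = 2^-1.
Proof. by case: habs => _ [_ [_ [_ [_ [H _]]]]]. Qed.

Lemma abs0 (K : closedFieldType) (R : realType) (abs : K -> R) (habs : C2_like abs) : abs 0 = 0.
Proof. by apply/(abs_eq0 habs). Qed.

Lemma abs_gt0 (K : closedFieldType) (R : realType) (abs : K -> R) (habs : C2_like abs) x : x != 0 -> 0 < abs x.
Proof.
move=> hx; rewrite lt_neqAle abs_ge0 // andbT eq_sym; apply/eqP => /(abs_eq0 habs) h.
by rewrite h eqxx in hx.
Qed.

Lemma abs1 (K : closedFieldType) (R : realType) (abs : K -> R) (habs : C2_like abs) : abs 1 = 1.
Proof.
have h := absM habs 1 1; rewrite mulr1 in h.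
have p := abs_gt0 habs (oner_neq0 K).
have : abs 1 * (abs 1 - 1) = 0 by rewrite mulrBr mulr1 -h subrr.
move/eqP; rewrite mulf_eq0 subr_eq0 => /orP [/eqP e|/eqP //].
by rewrite e ltxx in p.
Qed.

Lemma absN (K : closedFieldType) (R : realType) (abs : K -> R) (habs : C2_like abs) x : abs (- x) = abs x.
Proof.
have h := absM habs (-1) (-1); rewrite mulrNN mulr1 abs1 // in h.
have p := abs_ge0 habs (-1).
have e : abs (-1) = 1.
  have : (abs (-1) - 1) * (abs (-1) + 1) = 0 by rewrite -subr_sqr expr2 -h expr1n subrr.
  move/eqP; rewrite mulf_eq0 => /orP [|]; rewrite ?subr_eq0 ?addr_eq0 => /eqP //.
  move=> e; rewrite e in p; lra.
by rewrite -mulN1r absM // e mul1r.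
Qed.

Lemma absB (K : closedFieldType) (R : realType) (abs : K -> R) (habs : C2_like abs) x y : abs (x - y) = abs (y - x).
Proof. by rewrite -absN // opprB. Qed.

Lemma absV (K : closedFieldType) (R : realType) (abs : K -> R) (habs : C2_like abs) x : abs (x^-1) = (abs x)^-1.
Proof.
have [->|hx] := eqVneq x 0; first by rewrite invr0 abs0 // invr0.
have := absM habs x x^-1; rewrite mulfV // abs1 // => h.
have p := abs_gt0 habs hx.
apply: (mulfI (lt0r_neq0 p)); by rewrite -h mulfV // lt0r_neq0.
Qed.

Lemma absX (K : closedFieldType) (R : realType) (abs : K -> R) (habs : C2_like abs) x n : abs (x ^+ n) = abs x ^+ n.
Proof. elim: n => [|n IH]; by rewrite ?expr0 ?abs1 // !exprS absM // IH. Qed.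

Lemma absD_le (K : closedFieldType) (R : realType) (abs : K -> R) (habs : C2_like abs) x y c :
  abs x <= c -> abs y <= c -> abs (x + y) <= c.
Proof. move=> h1 h2; apply: le_trans (absD habs x y) _; by rewrite ge_max h1 h2. Qed.

Lemma absD_lt (K : closedFieldType) (R : realType) (abs : K -> R) (habs : C2_like abs) x y c :
  abs x < c -> abs y < c -> abs (x + y) < c.
Proof. move=> h1 h2; apply: le_lt_trans (absD habs x y) _; by rewrite gt_max h1 h2. Qed.

Lemma abs_ultra (K : closedFieldType) (R : realType) (abs : K -> R) (habs : C2_like abs) x y :
  abs x < abs y -> abs (x + y) = abs y.
Proof.
move=> h; apply/eqP; rewrite eq_le; apply/andP; split.
  by apply: absD_le => //; apply: ltW.
have e : y = (x + y) + (- x) by rewrite addrC addKr.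
have := absD habs (x + y) (- x); rewrite -e absN //.
rewrite le_max => /orP [//|h']; by rewrite leNgt h in h'.
Qed.

Lemma contr_cvg (K : closedFieldType) (R : realType) (abs : K -> R) (habs : C2_like abs)
  (F : K -> K) c s k y : 0 <= k -> k < 1 -> abs (y - c) <= s ->
  (forall x, abs (x - c) <= s -> abs (F x - c) <= k * abs (x - c)) ->
  cvgK abs (fun n => iter n F y) c /\ forall n, abs (iter n F y - c) <= s.
Proof.
move=> k0 k1 hy hs.
have B : forall n, abs (iter n F y - c) <= k ^+ n * abs (y - c).
  elim=> [|n IH]; first by rewrite expr0 mul1r.
  have kn1 : k ^+ n <= 1 by rewrite exprn_ile1 // ltW.
  have h0 := abs_ge0 habs (y - c).
  have hn : abs (iter n F y - c) <= s.
    apply: le_trans IH _; apply: le_trans hy; nra.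
  rewrite iterS; apply: le_trans (hs _ hn) _.
  rewrite exprS -mulrA ler_wpM2l //.
split; last first.
  move=> n; apply: le_trans (B n) _.
  have kn1 : k ^+ n <= 1 by rewrite exprn_ile1 // ltW.
  have h0 := abs_ge0 habs (y - c).
  apply: le_trans hy; nra.
move=> e e0.
have [N HN] := geom_small k0 k1 (abs_ge0 habs (y - c)) e0.
exists N => n hn; exact: le_lt_trans (B n) (HN n hn).
Qed.

Theorem theorem3p8 (K : closedFieldType) (R : realType) (abs : K -> R)
  (habs : C2_like abs) (a b : K) (ha : a != 0) (hb : b != 0) (hab : a != b)
  (h2ab : abs b < abs (2 * a)) :
  let P := - 1 / b in
  let f := fun x : K => a * x ^+ 2 / (b * x + 1) in
  let x1 := 0 : K in
  let x2 := 1 / (a - b) in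
  let r1 := 1 / abs a in
  attracting abs f P x1 /\ attracting abs f P x2 /\
  (forall y, basin abs f P x1 y <-> ballK abs x1 r1 y) /\
  (forall y, basin abs f P x2 y <-> ballK abs x2 r1 y).
Proof.
move=> P f x1 x2 r1.
have ap : 0 < abs a := abs_gt0 habs ha.
set al := abs a.
have a2 : abs (2 * a) = al / 2 by rewrite absM // abs2 // mulrC.
rewrite a2 in h2ab.
have b0 : 0 <= abs b := abs_ge0 habs b.
pose ai := al^-1.
have aip : 0 < ai by rewrite /ai invr_gt0.
have aai : al * ai = 1 by rewrite /ai mulfV // lt0r_neq0.
have abn : a - b != 0 by rewrite subr_eq0.
have aab : abs (a - b) = al.
  rewrite addrC abs_ultra // absN // -/al. lra.
have ax2 : abs x2 = ai by rewrite /x2 absM // abs1 // absV // aab mul1r.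
have q : abs (a * x2 + 1) <= 2^-1.
  have -> : a * x2 + 1 = (2 * a - b) / (a - b) by rewrite /x2; field.
  rewrite absM // absV // aab -/ai.
  have : abs (2*a - b) <= al/2 by apply: absD_le => //; rewrite ?a2 ?absN //; lra.
  move=> h; have h' : abs (2 * a - b) * ai <= al / 2 * ai by rewrite ler_wpM2r // ltW.
  apply: le_trans h' _; rewrite mulrAC aai mul1r.
  done.
have den : forall x, abs x <= ai -> abs (b * x + 1) = 1.
  move=> x hx; rewrite abs_ultra // ?abs1 // absM //.
  have := abs_ge0 habs x; nra.
have nP : forall x, b * x + 1 != 0 -> x != P.
  move=> x; apply: contra => /eqP ->; rewrite /P; apply/eqP; by field.
have nP' : forall x, x != P -> b * x + 1 != 0.
  move=> x; apply: contra => /eqP h; rewrite /P.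
  have -> : x = (b * x + 1 - 1) / b by field.
  by rewrite h sub0r.
have den0 : forall x, abs x <= ai -> b * x + 1 != 0.
  move=> x /den h; apply/eqP => e; rewrite e abs0 // in h; lra.
have ident : forall x, b * x + 1 != 0 -> f x - x2 = (x - x2) * (a * x + 1) / (b * x + 1).
  move=> x hx; rewrite /f /x2; field; by rewrite hx abn.
have fabs : forall x, abs (f x) = al * abs x ^+ 2 / abs (b * x + 1).
  by move=> x; rewrite /f !absM // absV // absX.
have grow : forall x, ai <= abs x -> b * x + 1 != 0 -> abs x <= abs (f x).
  move=> x hx hd; rewrite fabs.
  have dp := abs_gt0 habs hd.
  have dl : abs (b * x + 1) <= al * abs x.
    apply: absD_le => //; rewrite ?abs1 ?absM //; nra.
  rewrite ler_pdivlMr //; nra.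
have dsmall : forall e, 0 < e -> exists d, 0 < d /\ forall h, abs h < d -> abs h <= ai /\ al * abs h < e.
  move=> e e0; exists (Num.min ai (e * ai)); split.
    by rewrite lt_min aip mulr_gt0.
  move=> h; rewrite lt_min => /andP [h1 h2]; split; first exact: ltW.
  have : al * abs h < al * (e * ai) by rewrite ltr_pM2l.
  by rewrite mulrCA aai mulr1.
have fx1 : f x1 = x1 by rewrite /f /x1 expr0n /= mulr0 mul0r.
have fx2 : f x2 = x2.
  apply/eqP; rewrite -subr_eq0 ident ?subrr ?mul0r ?mul0r //.
  by apply: den0; rewrite ax2.
split.
  split; first by apply: nP; apply: den0; rewrite /x1 abs0 // ltW.
  split; first exact: fx1.
  exists 0; split; last by rewrite abs0 //; lra.
  move=> e e0; have [d [d0 hd]] := dsmall e e0; exists d; split => // h h0 hhd.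
  have [hh1 hh2] := hd h hhd.
  have hn : h != 0 by apply/eqP => e1; rewrite e1 abs0 // ltxx in h0.
  have dn := den0 h hh1.
  have -> : (f (x1 + h) - f x1) / h - 0 = a * h / (b * h + 1).
    rewrite fx1 /x1 add0r /f; field; by rewrite dn hn.
  by rewrite absM // absV // den // invr1 mulr1 absM.
split.
  split; first by apply: nP; apply: den0; rewrite ax2.
  split; first exact: fx2.
  have hx2 : abs x2 <= ai by rewrite ax2.
  exists ((a * x2 + 1) / (b * x2 + 1)); split; last first.
    rewrite absM // absV // den // invr1 mulr1; lra.
  move=> e e0; have [d [d0 hd]] := dsmall e e0; exists d; split => // h h0 hhd.
  have [hh1 hh2] := hd h hhd.
  have hn : h != 0 by apply/eqP => e1; rewrite e1 abs0 // ltxx in h0.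
  have hxh : abs (x2 + h) <= ai by apply: absD_le.
  have dn := den0 _ hxh.
  have dn2 := den0 _ hx2.
  have -> : (f (x2 + h) - f x2) / h - (a * x2 + 1) / (b * x2 + 1)
      = h * (a - b) / ((b * x2 + 1) * (b * (x2 + h) + 1)).
    rewrite fx2 ident // addrAC subrr add0r; field; by rewrite dn dn2 hn.
  by rewrite !absM // absV // !absM // !den // aab mulr1 invr1 mulr1 mulrC.
split.
  move=> y; rewrite /ballK /x1 /r1 subr0 div1r -/al -/ai; split.
    move=> [hP hc]; rewrite ltNge; apply/negP => hy.
    have G : forall n, abs y <= abs (iter n f y).
      elim=> [|n IH]; first exact: lexx.
      rewrite iterS; apply: le_trans (IH) _.
      apply: grow; [exact: le_trans hy IH | exact: nP' (hP n)].
    have [N HN] := hc ai aip.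
    have := HN N (leqnn N); rewrite subr0 => h.
    have := G N; lra.
  move=> hy.
  have k0 : 0 <= al * abs y by rewrite mulr_ge0 ?abs_ge0 // ltW.
  have k1 : al * abs y < 1.
    have : al * abs y < al * ai by rewrite ltr_pM2l.
    by rewrite aai.
  have step : forall x, abs (x - 0) <= abs y -> abs (f x - 0) <= al * abs y * abs (x - 0).
    move=> x; rewrite !subr0 => hx.
    have hxa : abs x <= ai by apply: le_trans hx _; exact: ltW.
    rewrite fabs den // divr1.
    by rewrite expr2 mulrA ler_wpM2r ?abs_ge0 // ler_wpM2l // (ltW ap).
  have hy0 : abs (y - 0) <= abs y by rewrite subr0.
  have [C1 C2] := contr_cvg habs k0 k1 hy0 step.
  split => // n; apply: nP; apply: den0.
  have := C2 n; rewrite subr0 => h; apply: le_trans h _; exact: ltW.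
move=> y; rewrite /ballK /r1 div1r -/al -/ai; split.
  move=> [hP hc]; rewrite ltNge; apply/negP => hy.
  have G : forall n, ai <= abs (iter n f y - x2).
    elim=> [|n IH]; first exact: hy.
    rewrite iterS.
    set x := iter n f y in IH *.
    have hd := nP' _ (hP n).
    have [hxs|hxl] := leP (abs x) ai.
      rewrite ident // absM // absV // den // invr1 mulr1 absM //.
      have e1 : a * x + 1 = a * (x - x2) + (a * x2 + 1) by ring.
      have ge1 : 1 <= abs (a * (x - x2)) by rewrite absM // -aai ler_wpM2l // ltW.
      have hu : abs (a * x + 1) = abs (a * (x - x2)).
        rewrite e1 (addrC (a * (x - x2))) (abs_ultra habs (x:=a*x2+1) (y:=a*(x-x2))) //; lra.
      rewrite hu.
      have := abs_ge0 habs (x - x2); nra.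
    have gx := grow x (ltW hxl) hd.
    rewrite (addrC (f x)) (abs_ultra habs (x:=-x2) (y:=f x)); first lra.
    rewrite absN // ax2; lra.
  have [N HN] := hc ai aip.
  have := HN N (leqnn N); have := G N; lra.
move=> hy.
set s := abs (y - x2) in hy.
have s0 : 0 <= s by rewrite abs_ge0.
have k0 : 0 <= Num.max (al * s) 2^-1 by rewrite le_max; apply/orP; right; lra.
have k1 : Num.max (al * s) 2^-1 < 1.
  rewrite gt_max; apply/andP; split; last lra.
  have : al * s < al * ai by rewrite ltr_pM2l.
  by rewrite aai.
have near : forall x, abs (x - x2) <= s -> abs x <= ai.
  move=> x hx; have -> : x = (x - x2) + x2 by rewrite subrK.
  apply: absD_le => //; [exact: le_trans hx (ltW hy) | by rewrite ax2].
have step : forall x, abs (x - x2) <= s -> abs (f x - x2) <= Num.max (al * s) 2^-1 * abs (x - x2).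
  move=> x hx; have hxa := near x hx; have hd := den0 x hxa.
  rewrite ident // absM // absV // den // invr1 mulr1 absM // mulrC.
  rewrite ler_wpM2r ?abs_ge0 //.
  have e1 : a * x + 1 = a * (x - x2) + (a * x2 + 1) by ring.
  rewrite e1; apply: absD_le => //; rewrite le_max; apply/orP; [left|right] => //.
  by rewrite absM // ler_wpM2l // ltW.
have [C1 C2] := contr_cvg habs k0 k1 (lexx s) step.
split => // n; apply: nP; apply: den0; apply: near; exact: C2.
Qed.
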